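(* Assume the setting (S) below. If $V$ and $V'$ are proper $T$-submodules of $M$, then $V+V'$ is a proper $T$-submodule of $M$.
   Context: Setting (S): $\mathbb{F}$ is a field, $d\ge0$, and $(\{\theta_i\}_{i=0}^d;\{\theta^*_i\}_{i=0}^d;\{\zeta_i\}_{i=0}^d)$ are scalars in $\mathbb{F}$ satisfying: (C1) $\theta_i\ne\theta_j$, $\theta^*_i\ne\theta^*_j$ for $i\ne j$; (C2) $\zeta_0=1$, $\zeta_d\ne0$, $\sum_{i=0}^d\eta_{d-i}(\theta_0)\eta^*_{d-i}(\theta^*_0)\zeta_i\ne0$, where $\eta_i(\lambda)=\prod_{j=0}^{i-1}(\lambda-\theta_{d-j})$, $\eta^*_i(\lambda)=\prod_{j=0}^{i-1}(\lambda-\theta^*_{d-j})$; (C3) $\frac{\theta_{i-2}-\theta_{i+1}}{\theta_{i-1}-\theta_i}$ and $\frac{\theta^*_{i-2}-\theta^*_{i+1}}{\theta^*_{i-1}-\theta^*_i}$ are equal and independent of $i$ for $2\le i\le d-1$. Let $\tau_i(\lambda)=\prod_{j=0}^{i-1}(\lambda-\theta_j)$. For any such data satisfying (C1),(C3), $T$ denotes the associative $\mathbb{F}$-algebra with $1$ generated by $a,e_0,\dots,e_d,a^*,e^*_0,\dots,e^*_d$ with relations $e_ie_j=\delta_{ij}e_i$, $e^*_ie^*_j=\delta_{ij}e^*_i$, $\sum_ie_i=\sum_ie^*_i=1$, $a=\sum_i\theta_ie_i$, $a^*=\sum_i\theta^*_ie^*_i$, $e^*_ia^ke^*_j=0$ and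 $e_i{a^*}^ke_j=0$ whenever $0\le i,j,k\le d$, $k<|i-j|$; $e^*_0Te^*_0$ is a commutative $\mathbb{F}$-algebra with identity $e^*_0$, and $\mu:\mathbb{F}[x_1,\dots,x_d]\to e^*_0Te^*_0$ is the surjective algebra homomorphism $x_i\mapsto e^*_0\tau_i(a)e^*_0$. It is assumed (the $\mu$-conjecture) that for every $d'\ge0$ and every data $\{\theta_i\},\{\theta^*_i\}$ of length $d'+1$ satisfying (C1),(C3), the corresponding $\mu$ is an isomorphism. For $1\le i\le d$ put $g_i=e^*_0\tau_i(a)e^*_0-\zeta_ie^*_0/((\theta^*_0-\theta^*_1)\cdots(\theta^*_0-\theta^*_i))$, $J=T(1-e^*_0)+\sum_{i=1}^dTg_i$, and $M=T/J$ as a left $T$-module. *)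

(* Defs.v *)
From HB Require Import structures.
From mathcomp Require Import all_boot all_order all_algebra.
From mathcomp Require Import mpoly.
Set Implicit Arguments. Unset Strict Implicit. Unset Printing Implicit Defensive.
Import GRing.Theory.
Local Open Scope ring_scope.

(* The free associative F-algebra with 1 on a set X of generators, realised *)
(* as formal finite linear combinations of words (seq X); two formal sums   *)
(* denote the same element iff all their word-coefficients agree (feq).     *)
Section FreeAlg.
Variable F : fieldType.
Variable X : eqType.

Definition fa := seq (F * seq X).

Definition fcoef (p : fa) (w : seq X) : F := \sum_(t <- p | t.2 == w) t.1.
Definition feq (p q : fa) : Prop := forall w, fcoef p w = fcoef q w.

Definition fzero : fa := [::].
Definition fone : fa := [:: (1, [::])].
Definition fgen (x : X) : fa := [:: (1, [:: x])].
Definition fadd (p q : fa) : fa := p ++ q.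
Definition fscale (c : F) (p : fa) : fa := [seq (c * t.1, t.2) | t <- p].
Definition fsub (p q : fa) : fa := p ++ fscale (-1) q.
Definition fmul (p q : fa) : fa := [seq (t.1 * s.1, t.2 ++ s.2) | t <- p, s <- q].
Definition fsum (s : seq fa) : fa := flatten s.
Definition fprod (s : seq fa) : fa := foldr fmul fone s.
Definition fpow (p : fa) (k : nat) : fa := iter k (fmul p) fone.

Definition in_ideal (R : seq fa) (p : fa) : Prop :=
  exists s : seq (F * seq X * fa * seq X),
    all (fun t => t.1.2 \in R) s /\
    feq p (fsum [seq fmul (fmul [:: t.1.1] t.1.2) [:: (1, t.2)] | t <- s]).

Definition in_left_ideal (R : seq fa) (p : fa) : Prop :=
  exists s : seq (F * seq X * fa),
    all (fun t => t.2 \in R) s /\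
    feq p (fsum [seq fmul [:: t.1] t.2 | t <- s]).
End FreeAlg.

(* The algebra T for data (d, theta, thetastar).  Generators:                   *)
(*   (false, None) = a,  (false, Some i) = e_i,                              *)
(*   (true, None)  = a*, (true, Some i)  = e*_i     (0 <= i <= d).           *)
(* T = F<gen d> / in_ideal (Trels ...).                                      *)
Definition gen (d : nat) := (bool * option 'I_d.+1)%type.

Section TAlg.
Variable F : fieldType.
Variable d : nat.
Variables th ths : nat -> F.

Local Notation FA := (fa F (gen d)).

Definition gA : FA := fgen F (false, None).
Definition gAs : FA := fgen F (true, None).
Definition gE (i : nat) : FA := fgen F (false, Some (inord i)).
Definition gEs (i : nat) : FA := fgen F (true, Some (inord i)).

Definition idx := iota 0 d.+1.

Definition Trels : seq FA :=
  [seq fsub (fmul (gE i) (gE j)) (if i == j then gE i else fzero F (gen d))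
     | i <- idx, j <- idx] ++
  [seq fsub (fmul (gEs i) (gEs j)) (if i == j then gEs i else fzero F (gen d))
     | i <- idx, j <- idx] ++
  [:: fsub (fsum [seq gE i | i <- idx]) (fone F (gen d));
      fsub (fsum [seq gEs i | i <- idx]) (fone F (gen d));
      fsub gA (fsum [seq fscale (th i) (gE i) | i <- idx]);
      fsub gAs (fsum [seq fscale (ths i) (gEs i) | i <- idx])] ++
  flatten [seq [seq fmul (fmul (gEs i) (fpow gA k)) (gEs j)
                  | k <- iota 0 (maxn (i - j)%N (j - i)%N)] | i <- idx, j <- idx] ++
  flatten [seq [seq fmul (fmul (gE i) (fpow gAs k)) (gE j)
                  | k <- iota 0 (maxn (i - j)%N (j - i)%N)] | i <- idx, j <- idx].

(* membership in the defining ideal of T (i.e. "p = 0 in T") *)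
Definition inI (p : FA) : Prop := in_ideal Trels p.

Definition tau_a (i : nat) : FA :=
  fprod [seq fsub gA (fscale (th j) (fone F (gen d))) | j <- iota 0 i].

Definition Xi (i : nat) : FA := fmul (fmul (gEs 0) (tau_a i)) (gEs 0).

(* mu : F[x_1..x_d] -> e*_0 T e*_0, x_i |-> e*_0 tau_i(a) e*_0, 1 |-> e*_0;
   variable i : 'I_d of the mpoly ring stands for x_{i+1}. *)
Definition mu (p : {mpoly F[d]}) : FA :=
  fsum [seq fscale (p@_m)
              (fmul (gEs 0) (fprod [seq fpow (Xi (val i).+1) (m i) | i : 'I_d <- enum 'I_d]))
        | m <- msupp p].

Definition mu_iso : Prop :=
  (forall t : FA, exists p : {mpoly F[d]},
      inI (fsub (fmul (fmul (gEs 0) t) (gEs 0)) (mu p))) /\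
  (forall p q : {mpoly F[d]}, inI (fsub (mu p) (mu q)) -> p = q).

End TAlg.

Section Conds.
Variable F : fieldType.

Definition C1 (d : nat) (th ths : nat -> F) : Prop :=
  forall i j, (i <= d)%N -> (j <= d)%N -> i <> j -> th i <> th j /\ ths i <> ths j.

Definition eta (d : nat) (th : nat -> F) (i : nat) (lam : F) : F :=
  \prod_(j < i) (lam - th (d - j)%N).

Definition C2 (d : nat) (th ths zeta : nat -> F) : Prop :=
  [/\ zeta 0%N = 1, zeta d <> 0 &
      \sum_(i < d.+1) eta d th (d - i)%N (th 0%N) * eta d ths (d - i)%N (ths 0%N) * zeta i
        <> 0].

Definition C3 (d : nat) (th ths : nat -> F) : Prop :=
  exists beta : F, forall i, (2 <= i)%N -> (i <= d.-1)%N ->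
    (th (i - 2)%N - th i.+1) / (th i.-1 - th i) = beta /\
    (ths (i - 2)%N - ths i.+1) / (ths i.-1 - ths i) = beta.

Definition mu_conjecture : Prop :=
  forall (d' : nat) (th' ths' : nat -> F),
    C1 d' th' ths' -> C3 d' th' ths' -> mu_iso d' th' ths'.
End Conds.

(* The module M = T/J and its T-submodules, represented by their preimages   *)
(* in the free algebra F<gen d> (which surjects onto T and onto M).          *)
Section Module.
Variable F : fieldType.
Variable d : nat.
Variables th ths zeta : nat -> F.

Local Notation FA := (fa F (gen d)).

Definition gi (i : nat) : FA :=
  fsub (Xi d th i)
       (fscale (zeta i / \prod_(1 <= j < i.+1) (ths 0%N - ths j)) (gEs F d 0)).

Definition Jgens : seq FA :=
  fsub (fone F (gen d)) (gEs F d 0) :: [seq gi i | i <- iota 1 d].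

(* preimage of J = T(1 - e*_0) + sum_i T g_i in the free algebra *)
Definition inJ (p : FA) : Prop :=
  exists q r, @inI F d th ths q /\ in_left_ideal Jgens r /\ feq p (fadd q r).

(* S is (the preimage in F<gen d> of) a T-submodule of M = T/J *)
Definition is_submodM (S : FA -> Prop) : Prop :=
  [/\ forall p, inJ p -> S p,
      forall p q, S p -> S q -> S (fadd p q),
      forall t p, S p -> S (fmul t p)
    & forall p q, S p -> inJ (fsub p q) -> S q].

Definition properM (S : FA -> Prop) : Prop := exists p, ~ S p.

Definition sumM (S S' : FA -> Prop) : FA -> Prop :=
  fun p => exists q r, S q /\ S' r /\ feq p (fadd q r).
End Module.

Arguments is_submodM {F} d th ths zeta S.
Arguments inJ {F} d th ths zeta p.

(* Main.v *)
Require Import Defs.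
From mathcomp Require Import all_boot all_order all_algebra.
From mathcomp Require Import mpoly.
From mathcomp Require Import ring zify.
Set Implicit Arguments. Unset Strict Implicit. Unset Printing Implicit Defensive.
Import GRing.Theory.
Local Open Scope ring_scope.

Section FA.
Variable F : fieldType.
Variable X : eqType.
Local Notation FA := (fa F X).

Lemma fcoefE (p : FA) w : fcoef p w = \sum_(u <- p) (if u.2 == w then u.1 else 0).
Proof. by rewrite /fcoef big_mkcond. Qed.

Lemma fcoef_cat (p q : FA) w : fcoef (p ++ q) w = fcoef p w + fcoef q w.
Proof. by rewrite /fcoef big_cat. Qed.

Lemma fcoef_nil w : fcoef ([::] : FA) w = 0.
Proof. by rewrite /fcoef big_nil. Qed.

Lemma fcoef_scale c (p : FA) w : fcoef (fscale c p) w = c * fcoef p w.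
Proof.
rewrite !fcoefE big_map mulr_sumr; apply: eq_bigr => u _.
by case: ifP => _ //; rewrite mulr0.
Qed.

Lemma fcoef_sub (p q : FA) w : fcoef (fsub p q) w = fcoef p w - fcoef q w.
Proof. by rewrite /fsub fcoef_cat fcoef_scale mulN1r. Qed.

Lemma fcoef_flatten (L : seq FA) w : fcoef (flatten L) w = \sum_(l <- L) fcoef l w.
Proof.
elim: L => [|l L IH] /=; first by rewrite big_nil fcoef_nil.
by rewrite big_cons fcoef_cat IH.
Qed.

Lemma big_fmul (G : F * seq X -> F) (x y : FA) :
  \sum_(u <- fmul x y) G u = \sum_(t <- x) \sum_(s <- y) G (t.1 * s.1, t.2 ++ s.2).
Proof.
elim: x => [|t x IH]; first by rewrite !big_nil.
by rewrite big_cons -IH /fmul /= big_cat big_map.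
Qed.

Lemma fcoef_mulS (x y : FA) w : fcoef (fmul x y) w =
  \sum_(t <- x) \sum_(s <- y) (if t.2 ++ s.2 == w then t.1 * s.1 else 0).
Proof. by rewrite fcoefE big_fmul. Qed.

Lemma cat_eqE (a b w : seq X) :
  (a ++ b == w) = (take (size a) w == a) && (b == drop (size a) w).
Proof.
apply/eqP/andP => [<-|[/eqP Ha /eqP Hb]].
  by rewrite take_size_cat // drop_size_cat.
by rewrite -Ha Hb cat_take_drop.
Qed.

Lemma fcoef_mul (x y : FA) w : fcoef (fmul x y) w =
  \sum_(t <- x) t.1 * (if take (size t.2) w == t.2 then fcoef y (drop (size t.2) w) else 0).
Proof.
rewrite fcoef_mulS; apply: eq_bigr => t _.
rewrite fcoefE; case: ifP => H.
  rewrite mulr_sumr; apply: eq_bigr => s _; rewrite cat_eqE H /= eq_sym.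
  by case: ifP; rewrite ?mulr0.
rewrite mulr0 big1 // => s _; by rewrite cat_eqE H.
Qed.

Lemma fmul_lin_r (x q q1 q2 : FA) c w :
  (forall v, fcoef q v = fcoef q1 v + c * fcoef q2 v) ->
  fcoef (fmul x q) w = fcoef (fmul x q1) w + c * fcoef (fmul x q2) w.
Proof.
move=> H; rewrite !fcoef_mul mulr_sumr -big_split; apply: eq_bigr => t _ /=.
case: ifP => _; rewrite ?H; ring.
Qed.

Lemma fcoef_mul_scale_l c (x q : FA) w :
  fcoef (fmul (fscale c x) q) w = c * fcoef (fmul x q) w.
Proof.
rewrite !fcoef_mul big_map mulr_sumr; apply: eq_bigr => t _ /=; ring.
Qed.

Lemma fcoef_mul_one_r (x : FA) w : fcoef (fmul x (fone F X)) w = fcoef x w.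
Proof.
rewrite fcoef_mulS fcoefE; apply: eq_bigr => t _.
by rewrite big_cons big_nil cats0 mulr1 addr0.
Qed.

Lemma fcoef_mulA (x y z : FA) w :
  fcoef (fmul (fmul x y) z) w = fcoef (fmul x (fmul y z)) w.
Proof.
rewrite fcoef_mulS big_fmul.
rewrite fcoef_mulS; apply: eq_bigr => t _.
rewrite big_fmul; apply: eq_bigr => s _; apply: eq_bigr => r _ /=.
by rewrite catA mulrA.
Qed.

Lemma fmul_monos (x q : FA) :
  fmul x q = fsum [seq fmul [:: u] q | u <- x].
Proof.
elim: x => [|u x IH] //=.
rewrite /fsum /= -/(fsum _) -IH. by rewrite /fmul /= cats0.
Qed.

Lemma feq_refl (p : FA) : feq p p. Proof. by []. Qed.


Lemma feq_cat (p q p' q' : FA) : feq p p' -> feq q q' -> feq (p ++ q) (p' ++ q').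
Proof. by move=> H1 H2 w; rewrite !fcoef_cat H1 H2. Qed.

Lemma ideal_add R (p q : FA) : in_ideal R p -> in_ideal R q -> in_ideal R (p ++ q).
Proof.
move=> [s1 [a1 e1]] [s2 [a2 e2]]; exists (s1 ++ s2); split.
  by rewrite all_cat a1 a2.
by rewrite map_cat /fsum flatten_cat; apply: feq_cat.
Qed.

Lemma ideal_scale R c (p : FA) : in_ideal R p -> in_ideal R (fscale c p).
Proof.
move=> [s [a e]].
exists [seq (((c * t.1.1.1, t.1.1.2), t.1.2), t.2) | t <- s]; split.
  by rewrite all_map.
move=> w; rewrite fcoef_scale e /fsum !fcoef_flatten !big_map mulr_sumr.
apply: eq_bigr => t _ /=.
have -> : [:: (c * t.1.1.1, t.1.1.2)] = fscale c [:: t.1.1] by [].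
by rewrite [RHS]fcoef_mulA fcoef_mul_scale_l -fcoef_mulA.
Qed.

Lemma lideal_add R (p q : FA) : in_left_ideal R p -> in_left_ideal R q -> in_left_ideal R (p ++ q).
Proof.
move=> [s1 [a1 e1]] [s2 [a2 e2]]; exists (s1 ++ s2); split.
  by rewrite all_cat a1 a2.
by rewrite map_cat /fsum flatten_cat; apply: feq_cat.
Qed.

Lemma lideal_scale R c (p : FA) : in_left_ideal R p -> in_left_ideal R (fscale c p).
Proof.
move=> [s [a e]].
exists [seq ((c * t.1.1, t.1.2), t.2) | t <- s]; split.
  by rewrite all_map.
move=> w; rewrite fcoef_scale e /fsum !fcoef_flatten !big_map mulr_sumr.
apply: eq_bigr => t _ /=.
have -> : [:: (c * t.1.1, t.1.2)] = fscale c [:: t.1] by [].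
by rewrite fcoef_mul_scale_l.
Qed.

Lemma lideal_mul R (x g : FA) : g \in R -> in_left_ideal R (fmul x g).
Proof.
move=> gR; exists [seq (u, g) | u <- x]; split.
  by rewrite all_map; apply/allP => u _ /=.
by rewrite fmul_monos -map_comp.
Qed.

End FA.

Section TT.
Variable F : fieldType.
Variable d : nat.
Variables th ths zeta : nat -> F.
Local Notation FA := (fa F (gen d)).
Local Notation e := (gEs F d 0).
Local Notation J := (inJ d th ths zeta).
Local Notation JG := (Jgens d th ths zeta).

Lemma inJ_feq (p p' : FA) : J p -> feq p p' -> J p'.
Proof. move=> [q [r [Hq [Hr H]]]] H2; exists q, r; split=> //; split=> // w; by rewrite -H2 H. Qed.

Lemma inJ_zero (p : FA) : (forall w, fcoef p w = 0) -> J p.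
Proof.
move=> H; exists [::], [::]; split; first by exists [::].
split; first by exists [::].
by move=> w; rewrite H /fadd cats0 fcoef_nil.
Qed.

Lemma inJ_add (p q : FA) : J p -> J q -> J (fadd p q).
Proof.
move=> [q1 [r1 [H1 [H2 H3]]]] [q2 [r2 [H4 [H5 H6]]]].
exists (q1 ++ q2), (r1 ++ r2); split; first exact: ideal_add.
split; first exact: lideal_add.
move=> w; rewrite /fadd !fcoef_cat H3 H6 /fadd !fcoef_cat; ring.
Qed.

Lemma inJ_scale c (p : FA) : J p -> J (fscale c p).
Proof.
move=> [q1 [r1 [H1 [H2 H3]]]].
exists (fscale c q1), (fscale c r1); split; first exact: ideal_scale.
split; first exact: lideal_scale.
move=> w; rewrite /fadd !fcoef_cat !fcoef_scale H3 /fadd !fcoef_cat; ring.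
Qed.

Lemma inJ_lin (P A B : FA) c : J A -> J B ->
  (forall w, fcoef P w = fcoef A w + c * fcoef B w) -> J P.
Proof.
move=> HA HB H; apply: (inJ_feq (inJ_add HA (inJ_scale c HB))).
by move=> w; rewrite H /fadd fcoef_cat fcoef_scale.
Qed.

Lemma inJ_LI (p : FA) : in_left_ideal JG p -> J p.
Proof.
move=> H; exists [::], p; split; first by exists [::].
by split.
Qed.

Lemma inJ_I (p : FA) : inI th ths p -> J p.
Proof.
move=> H; exists p, [::]; split => //; split; first by exists [::].
by move=> w; rewrite /fadd cats0.
Qed.

Lemma J_xe (x : FA) : J (fsub x (fmul x e)).
Proof.
have H : fsub (fone F (gen d)) e \in JG by rewrite inE eqxx.
apply: (inJ_feq (inJ_LI (lideal_mul x H))).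
move=> w; rewrite (@fmul_lin_r _ _ x _ (fone F (gen d)) e (-1) w).
  by rewrite fcoef_mul_one_r fcoef_sub; ring.
by move=> v; rewrite fcoef_sub; ring.
Qed.

Definition Rp (y : FA) := exists c, forall x, J (fsub (fmul x y) (fscale c x)).

Lemma Rp_one : Rp (fone F (gen d)).
Proof.
exists 1 => x; apply: inJ_zero => w.
by rewrite fcoef_sub fcoef_mul_one_r fcoef_scale mul1r subrr.
Qed.

Lemma Rp_mul (a b : FA) : Rp a -> Rp b -> Rp (fmul a b).
Proof.
move=> [ca Ha] [cb Hb]; exists (ca * cb) => x.
apply: (inJ_lin (Hb (fmul x a)) (Ha x) (c := cb)) => w.
rewrite !fcoef_sub !fcoef_scale -fcoef_mulA; ring.
Qed.

Lemma Rp_Xi j : (1 <= j <= d)%N -> Rp (Xi d th j).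
Proof.
move=> Hj.
have H : gi d th ths zeta j \in JG.
  by rewrite inE; apply/orP; right; apply: map_f; rewrite mem_iota; lia.
have Hg v : fcoef (gi d th ths zeta j) v = fcoef (Xi d th j) v +
   - (zeta j / \prod_(1 <= i < j.+1) (ths 0%N - ths i)) * fcoef e v.
  by rewrite /gi fcoef_sub fcoef_scale mulNr.
move: (zeta j / _) Hg => k Hg.
exists k => x.
apply: (inJ_lin (c := - k) (inJ_LI (lideal_mul x H)) (J_xe x)).
move=> w; rewrite (@fmul_lin_r _ _ x _ (Xi d th j) e (- k) w Hg).
rewrite !fcoef_sub fcoef_scale; ring.
Qed.

Lemma Rp_pow y k : Rp y -> Rp (fpow y k).
Proof.
move=> Hy; elim: k => [|k IH]; first exact: Rp_one.
exact: Rp_mul.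
Qed.

Lemma Rp_prod (I : Type) (s : seq I) (f : I -> FA) :
  (forall i, Rp (f i)) -> Rp (Defs.fprod [seq f i | i <- s]).
Proof.
move=> H; elim: s => [|i s IH]; first exact: Rp_one.
exact: Rp_mul.
Qed.

Lemma fcoef_fadd (a b : FA) w : fcoef (fadd a b) w = fcoef a w + fcoef b w.
Proof. exact: fcoef_cat. Qed.

Lemma fcoef_fsum_cons (a : FA) l w : fcoef (fsum (a :: l)) w = fcoef a w + fcoef (fsum l) w.
Proof. exact: fcoef_cat. Qed.

Lemma sum_lemma (T : Type) (s : seq T) (f : T -> F) (P : T -> FA) :
  (forall m, exists c, J (fsub (fmul e (P m)) (fscale c e))) ->
  exists c, J (fsub (fsum [seq fscale (f m) (fmul e (P m)) | m <- s]) (fscale c e)).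
Proof.
move=> H; elim: s => [|m s [c IH]].
  by exists 0; apply: inJ_zero => w; rewrite fcoef_sub fcoef_scale fcoef_nil mul0r subrr.
have [cm Hm] := H m.
exists (f m * cm + c).
apply: (inJ_lin (c := f m) IH Hm) => w.
rewrite !fcoef_sub map_cons fcoef_fsum_cons !fcoef_scale; ring.
Qed.

Lemma mu_J (p : {mpoly F[d]}) : exists c, J (fsub (mu th p) (fscale c e)).
Proof.
apply: sum_lemma => m.
have [c Hc] : Rp (Defs.fprod [seq fpow (Xi d th (val i).+1) (m i) | i : 'I_d <- enum 'I_d]).
  apply: Rp_prod => i; apply: Rp_pow; apply: Rp_Xi.
  by apply/andP; split => //; exact: ltn_ord.
by exists c; apply: Hc.
Qed.

Lemma lemA : mu_iso d th ths -> forall t : FA, exists c, J (fsub (fmul e t) (fscale c e)).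
Proof.
move=> [Hs _] t.
have [p Hp] := Hs t.
have [c Hc] := mu_J p.
exists c.
apply: (inJ_lin (c := 1) (inJ_add (J_xe (fmul e t)) (inJ_I Hp)) Hc) => w.
rewrite fcoef_fadd !fcoef_sub; ring.
Qed.


Lemma fcoef_mul_one_l (q : FA) w : fcoef (fmul (fone F (gen d)) q) w = fcoef q w.
Proof. by rewrite fcoef_mul big_cons big_nil /= take0 drop0 eqxx mul1r addr0. Qed.

Lemma J_e_one : J (fsub e (fone F (gen d))).
Proof.
apply: (inJ_feq (inJ_scale (-1) (J_xe (fone F (gen d))))) => w.
rewrite fcoef_scale !fcoef_sub fcoef_mul_one_l; ring.
Qed.

Lemma sub_feq S (p p' : FA) : is_submodM d th ths zeta S -> S p -> feq p p' -> S p'.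
Proof.
move=> [_ _ _ H4] Hp He; apply: (H4 _ _ Hp); apply: inJ_zero => w.
by rewrite fcoef_sub He subrr.
Qed.

Lemma sub_all S : is_submodM d th ths zeta S -> S (fone F (gen d)) -> forall p, S p.
Proof.
move=> HS H1 p; have [_ _ H3 _] := HS.
apply: (sub_feq HS (H3 p _ H1)) => w; exact: fcoef_mul_one_r.
Qed.

Lemma lemB S (q : FA) c : is_submodM d th ths zeta S -> S q ->
  J (fsub (fmul e q) (fscale c e)) -> c != 0 -> forall p, S p.
Proof.
move=> HS Hq HJ Hc; have [H1 H2 H3 H4] := HS.
have Hce : S (fscale c e) by apply: (H4 _ _ (H3 e _ Hq)).
have He : S e.
  apply: (sub_feq HS (H3 [:: (c^-1, [::])] _ Hce)) => w.
  rewrite fcoef_mul big_cons big_nil /= take0 drop0 eqxx addr0.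
  have := fcoef_scale c e w; rewrite /= => ->.
  by rewrite mulrA mulVf // mul1r.
apply: sub_all => //; exact: (H4 _ _ He J_e_one).
Qed.

Lemma lemC S (q : FA) : mu_iso d th ths -> is_submodM d th ths zeta S -> properM S -> S q ->
  J (fmul e q).
Proof.
move=> Hmu HS [p Hp] Hq.
have [c Hc] := lemA Hmu q.
have [/eqP c0|c0] := boolP (c == 0).
  apply: (inJ_feq Hc) => w; by rewrite fcoef_sub fcoef_scale c0 mul0r subr0.
by case: Hp; apply: (lemB HS Hq Hc c0).
Qed.

End TT.

Theorem lemma9p2 (F : fieldType) (d : nat) (th ths zeta : nat -> F) :
  C1 d th ths -> C2 d th ths zeta -> C3 d th ths -> mu_conjecture F ->
  forall V V' : fa F (gen d) -> Prop,
    is_submodM d th ths zeta V -> properM V ->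
    is_submodM d th ths zeta V' -> properM V' ->
    is_submodM d th ths zeta (sumM V V') /\ properM (sumM V V').
Proof.
move=> HC1 _ HC3 Hconj V V' HV PV HV' PV'.
have Hmu := Hconj d th ths HC1 HC3.
have [A1 A2 A3 A4] := HV; have [B1 B2 B3 B4] := HV'.
split.
  split.
  - move=> p Hp; exists p, [::]; split; first exact: A1.
    split; first by apply: B1; apply: inJ_zero => w; exact: fcoef_nil.
    by move=> w; rewrite fcoef_fadd fcoef_nil addr0.
  - move=> p p' [q [r [Hq [Hr H]]]] [q' [r' [Hq' [Hr' H']]]].
    exists (fadd q q'), (fadd r r'); split; first exact: A2.
    split; first exact: B2.
    move=> w; rewrite !fcoef_fadd H H' !fcoef_fadd; ring.
  - move=> t p [q [r [Hq [Hr H]]]].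
    exists (fmul t q), (fmul t r); split; first exact: A3.
    split; first exact: B3.
    move=> w; rewrite fcoef_fadd (@fmul_lin_r _ _ t p q r 1 w); first by rewrite mul1r.
    by move=> v; rewrite H fcoef_fadd mul1r.
  - move=> p p' [q [r [Hq [Hr H]]]] Hpp.
    exists q, (fsub p' q); split => //; split.
      apply: (B4 _ _ Hr); apply: (inJ_feq Hpp) => w.
      rewrite !fcoef_sub H fcoef_fadd; ring.
    move=> w; rewrite fcoef_fadd fcoef_sub; ring.
have [p0 Hp0] := PV.
exists (fone F (gen d)) => [[q [r [Hq [Hr H]]]]].
have Jq := lemC Hmu HV PV Hq.
have Jr := lemC Hmu HV' PV' Hr.
have Je : inJ d th ths zeta (gEs F d 0).
  apply: (inJ_lin (c := 1) Jq Jr) => w.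
  rewrite -(fcoef_mul_one_r (gEs F d 0)).
  by apply: fmul_lin_r => v; rewrite H fcoef_fadd mul1r.
have J1 : inJ d th ths zeta (fone F (gen d)).
  apply: (inJ_lin (c := -1) Je (@J_e_one F d th ths zeta)) => w.
  rewrite fcoef_sub; ring.
by apply: Hp0; apply: (sub_all HV (A1 _ J1)).
Qed.
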